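(* Let $F$ be a Banach lattice and $E$ a subspace of $F$. If $E$ is strongly dispersed, then $E$ is strictly dispersed.
   Context: Elements $x,y$ of a Banach lattice are disjoint if $|x|\wedge|y|=0$. $F^a$ denotes the closed ideal of order continuous elements of $F$. The una-topology on $F$ is the linear topology with zero neighborhood base $\{f\in F:\||f|\wedge h\|<\varepsilon\}$, $h\in F^a_+$, $\varepsilon>0$. $E$ is strongly dispersed if some una-neighborhood of $0_F$ is disjoint from the unit sphere $\mathrm{S}_E$ of $E$. $E$ is strictly dispersed if there is $\delta>0$ such that there is no disjoint sequence $(f_n)$ of norm-one elements of $F$ with $\mathrm{dist}(f_n,E)<\delta$ for all $n$. *)

(* Defs.v *)
From HB Require Import structures.
From mathcomp Require Import all_boot all_order all_algebra.
From mathcomp Require Import all_classical all_reals all_analysis.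
Set Implicit Arguments. Unset Strict Implicit. Unset Printing Implicit Defensive.
Import Order.TTheory GRing.Theory Num.Theory.
Import numFieldNormedType.Exports.
Local Open Scope classical_set_scope.
Local Open Scope ring_scope.

Section BanachLattice.
Variables (R : realType) (F : completeNormedModType R).
Variables (le : F -> F -> Prop) (join : F -> F -> F).

Definition bl_meet (x y : F) : F := - join (- x) (- y).
Definition bl_abs (x : F) : F := join x (- x).

Definition is_banach_lattice : Prop :=
  [/\ (forall x, le x x),
      (forall x y, le x y -> le y x -> x = y) &
      (forall x y z, le x y -> le y z -> le x z)] /\
  (forall x y, le x (join x y) /\ le y (join x y)) /\
  (forall x y z, le x z -> le y z -> le (join x y) z) /\
  (forall x y z, le x y -> le (x + z) (y + z)) /\
  (forall (a : R) x y, 0 <= a -> le x y -> le (a *: x) (a *: y)) /\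
  (forall x y, le (bl_abs x) (bl_abs y) -> `|x| <= `|y|).

Definition bl_disjoint (x y : F) : Prop := bl_meet (bl_abs x) (bl_abs y) = 0.

(* x is an order continuous element: every decreasing net in [0,|x|] with
   infimum 0 converges to 0 in norm.  A decreasing net is represented by its
   range D, a nonempty downward directed subset of [0,|x|]; the infimum of D
   is 0, and (the norm being monotone on positives) norm convergence of the
   net to 0 means that elements of D of arbitrarily small norm exist. *)
Definition order_continuous (x : F) : Prop :=
  forall D : set F,
    D !=set0 ->
    (forall d, D d -> le 0 d /\ le d (bl_abs x)) ->
    (forall a b, D a -> D b -> exists2 c, D c & le c a /\ le c b) ->
    (forall y, (forall d, D d -> le y d) -> le y 0) ->
    forall eps : R, 0 < eps -> exists2 d, D d & `|d| < eps.

Definition is_subspace (E : set F) : Prop :=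
  E 0 /\ (forall x y, E x -> E y -> E (x + y)) /\
  (forall (a : R) x, E x -> E (a *: x)).

(* E is strongly dispersed: some basic una-neighborhood
   {f : || |f| /\ h || < eps}, h in F^a_+, eps > 0, misses the unit sphere S_E *)
Definition strongly_dispersed (E : set F) : Prop :=
  exists h : F, exists eps : R,
    [/\ order_continuous h, le 0 h, 0 < eps &
        forall x, E x -> `|x| = 1 -> ~ (`|bl_meet (bl_abs x) h| < eps)].

Definition strictly_dispersed (E : set F) : Prop :=
  exists2 delta : R, 0 < delta &
    ~ (exists f : nat -> F,
         [/\ (forall n m, n <> m -> bl_disjoint (f n) (f m)),
             (forall n, `|f n| = 1) &
             (forall n, exists2 e, E e & `|f n - e| < delta)]).

End BanachLattice.

(* Main.v *)
Require Import Defs.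
From HB Require Import structures.
From mathcomp Require Import all_boot all_order all_algebra.
From mathcomp Require Import all_classical all_reals all_analysis.
From mathcomp Require Import lra.
Import Order.TTheory GRing.Theory Num.Theory.
Import numFieldNormedType.Exports.
Local Open Scope classical_set_scope.
Local Open Scope ring_scope.

Section BL.
Variables (R : realType) (F : completeNormedModType R).
Variables (le : F -> F -> Prop) (join : F -> F -> F).
Hypothesis HF : is_banach_lattice le join.

Let meet := bl_meet join.
Let abs := bl_abs join.

Lemma le_refl x : le x x.
Proof. by case: HF => -[]. Qed.
Lemma le_anti x y : le x y -> le y x -> x = y.
Proof. have [[_ H _] _] := HF; exact: H. Qed.
Lemma le_tr x y z : le x y -> le y z -> le x z.
Proof. have [[_ _ H] _] := HF; exact: H. Qed.
Lemma join_ub1 x y : le x (join x y).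
Proof. by case: HF => _ [H _]; case: (H x y). Qed.
Lemma join_ub2 x y : le y (join x y).
Proof. by case: HF => _ [H _]; case: (H x y). Qed.
Lemma join_lub x y z : le x z -> le y z -> le (join x y) z.
Proof. by case: HF => _ [_ [H _]]; apply: H. Qed.
Lemma le_addr x y z : le x y -> le (x + z) (y + z).
Proof. by case: HF => _ [_ [_ [H _]]]; apply: H. Qed.
Lemma le_scale (a : R) x y : 0 <= a -> le x y -> le (a *: x) (a *: y).
Proof. by case: HF => _ [_ [_ [_ [H _]]]]; apply: H. Qed.
Lemma norm_le x y : le (abs x) (abs y) -> `|x| <= `|y|.
Proof. by case: HF => _ [_ [_ [_ [_ H]]]]; apply: H. Qed.

Arguments le_anti {x y}.
Arguments le_tr {x y z}.
Arguments join_lub {x y z}.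
Arguments le_scale {a x y}.
Arguments norm_le {x y}.

Lemma le_addl x y z : le x y -> le (z + x) (z + y).
Proof. by rewrite ![z + _]addrC; apply: le_addr. Qed.
Lemma le_subr x y : le x y -> le 0 (y - x).
Proof. by move=> /(le_addr _ _ (- x)); rewrite subrr. Qed.
Lemma subr_le x y : le 0 (y - x) -> le x y.
Proof. by move=> /(le_addr _ _ x); rewrite add0r subrK. Qed.
Lemma le_opp x y : le x y -> le (- y) (- x).
Proof.
move=> /(le_addr _ _ (- x - y)).
by rewrite addrA subrr add0r addrCA subrr addr0.
Qed.
Lemma le_oppK x y : le (- y) (- x) -> le x y.
Proof. by move=> /le_opp; rewrite !opprK. Qed.

Lemma meet_lb1 x y : le (meet x y) x.
Proof. by apply: le_oppK; rewrite /meet /bl_meet opprK; apply: join_ub1. Qed.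
Lemma meet_lb2 x y : le (meet x y) y.
Proof. by apply: le_oppK; rewrite /meet /bl_meet opprK; apply: join_ub2. Qed.
Lemma meet_glb x y z : le z x -> le z y -> le z (meet x y).
Proof.
move=> h1 h2; apply: le_oppK; rewrite /meet /bl_meet opprK.
by apply: join_lub; apply: le_opp.
Qed.

Lemma joinC x y : join x y = join y x.
Proof. by apply: le_anti; apply: join_lub; first [exact: join_ub1 | exact: join_ub2]. Qed.

Lemma join_tr z x y : z + join x y = join (z + x) (z + y).
Proof.
apply: le_anti; last by apply: join_lub; apply: le_addl; [apply: join_ub1|apply: join_ub2].
have H : le (join x y) (- z + join (z + x) (z + y)).
  apply: join_lub.
  - have := @le_addl _ _ (- z) (join_ub1 (z + x) (z + y)); by rewrite addKr.
  - have := @le_addl _ _ (- z) (join_ub2 (z + x) (z + y)); by rewrite addKr.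
by have := @le_addl _ _ z H; rewrite addNKr.
Qed.

Lemma join_meet x y : x + y = join x y + meet x y.
Proof.
rewrite /meet /bl_meet.
have E : (x + y) + join (- x) (- y) = join y x.
  by rewrite join_tr addrK; congr join; rewrite addrC addKr.
by rewrite joinC -E addrK.
Qed.

Lemma le_add2 a b c d : le a b -> le c d -> le (a + c) (b + d).
Proof. by move=> h1 h2; apply: (le_tr (le_addr _ _ c h1)); apply: le_addl. Qed.

Lemma scale_join (a : R) x y : 0 < a -> a *: join x y = join (a *: x) (a *: y).
Proof.
move=> a0; have a0' : 0 <= a by exact: ltW.
apply: le_anti; last first.
  by apply: join_lub; apply: le_scale => //; [apply: join_ub1|apply: join_ub2].
have ai : 0 <= a^-1 by rewrite invr_ge0.
have H : le (join x y) (a^-1 *: join (a *: x) (a *: y)).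
  apply: join_lub.
  - have := le_scale ai (join_ub1 (a *: x) (a *: y)).
    by rewrite scalerA mulVf ?gt_eqF // scale1r.
  - have := le_scale ai (join_ub2 (a *: x) (a *: y)).
    by rewrite scalerA mulVf ?gt_eqF // scale1r.
by have := le_scale a0' H; rewrite scalerA mulfV ?gt_eqF // scale1r.
Qed.

Lemma scale_meet (a : R) x y : 0 < a -> a *: meet x y = meet (a *: x) (a *: y).
Proof.
move=> a0; rewrite /meet /bl_meet scalerN scale_join //.
by rewrite !scalerN.
Qed.

Lemma meet_tr v u h : meet u h + v = meet (u + v) (h + v).
Proof.
rewrite /meet /bl_meet !opprD.
have -> : join (- u - v) (- h - v) = - v + join (- u) (- h).
  by rewrite join_tr ![- v + _]addrC.
by rewrite opprD opprK addrC.
Qed.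

Lemma meet_mono a a' b b' : le a a' -> le b b' -> le (meet a b) (meet a' b').
Proof.
move=> h1 h2; apply: meet_glb.
- exact: le_tr (meet_lb1 a b) h1.
- exact: le_tr (meet_lb2 a b) h2.
Qed.

Lemma abs_ge0 x : le 0 (abs x).
Proof.
have H : le (x + - x) (abs x + abs x) by apply: le_add2; [apply: join_ub1|apply: join_ub2].
have E : abs x + abs x = (1 + 1 : R) *: abs x by rewrite scalerDl scale1r.
rewrite subrr E in H.
have h2 : (0 : R) <= (1 + 1)^-1 by rewrite invr_ge0 addr_ge0 ?ler01.
have n2 : (1 + 1 : R) != 0 by rewrite -mulr2n pnatr_eq0.
by have := le_scale h2 H; rewrite scaler0 scalerA mulVf // scale1r.
Qed.

Lemma le0_opp x : le 0 x -> le (- x) x.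
Proof. by move=> h; apply: le_tr (le_opp _ _ h) _; rewrite oppr0. Qed.

Lemma abs_pos x : le 0 x -> abs x = x.
Proof.
move=> h; apply: le_anti; last exact: join_ub1.
by apply: join_lub; [apply: le_refl | apply: le0_opp].
Qed.

Lemma abs_abs x : abs (abs x) = abs x.
Proof. exact: abs_pos (abs_ge0 x). Qed.

Lemma norm_abs x : `|abs x| = `|x|.
Proof.
apply/eqP; rewrite eq_le; apply/andP; split; apply: norm_le; rewrite abs_abs; exact: le_refl.
Qed.

Lemma norm_mono a b : le 0 a -> le a b -> `|a| <= `|b|.
Proof.
move=> ha hab; apply: norm_le; rewrite abs_pos // abs_pos //; exact: le_tr hab.
Qed.

Lemma abs_scale (a : R) x : 0 <= a -> abs (a *: x) = a *: abs x.
Proof.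
rewrite le_eqVlt => /orP [/eqP <-|a0].
  by rewrite !scale0r; apply: abs_pos; apply: le_refl.
by rewrite /abs /bl_abs scale_join // scalerN.
Qed.

Lemma abs_tri x y : le (abs (x + y)) (abs x + abs y).
Proof.
apply: join_lub; first by apply: le_add2; apply: join_ub1.
by rewrite opprD; apply: le_add2; apply: join_ub2.
Qed.

Lemma archi_small (a b : R) : 0 <= a -> 0 <= b ->
  (forall m : nat, m%:R * a <= b) -> a = 0.
Proof.
move=> a0 b0 H; apply/eqP; rewrite eq_le a0 andbT; apply/negP => /negP.
rewrite -ltNge => ap.
have hx : 0 <= b / a by rewrite divr_ge0.
have := truncn_lt_nat (Num.truncn (b / a)).+1 hx; rewrite ltnSn => /esym.
rewrite ltr_pdivrMr // => /lt_le_trans /(_ (H _)).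
by rewrite ltxx.
Qed.

Lemma disj_small (h : F) (g : nat -> F) :
  order_continuous le join h -> le 0 h ->
  (forall k, le 0 (g k) /\ le (g k) h) ->
  (forall j k, j <> k -> meet (g j) (g k) = 0) ->
  forall eta : R, 0 < eta -> exists k, `|g k| < eta.
Proof.
move=> oc h0 gb gd eta eta0.
pose D := fun d => [/\ le 0 d, le d h & exists n, forall k, (n <= k)%N -> le (g k) d].
have hD : D h by split; [exact: h0 | exact: le_refl | exists 0%N => k _; case: (gb k)].
have sub_le0 : forall x y : F, le 0 y -> le (x - y) x.
  move=> x y y0; have := le_addl _ _ x (le_opp _ _ y0); by rewrite oppr0 addr0.
have Dsub : forall d k, D d -> (forall j, (k <= j)%N -> le (g j) d) -> D (d - g k).
  move=> d k [d0 dh [n Hn]] Hk.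
  split.
  - apply: le_subr; apply: Hk; exact: leqnn.
  - apply: le_tr dh; apply: sub_le0; by case: (gb k).
  - exists (maxn n k).+1 => j hj.
    have jk : j <> k by move=> E; move: hj; rewrite E ltnNge leq_maxr.
    have jn : (n <= j)%N by apply: leq_trans (leq_maxl n k) (ltnW hj).
    apply: subr_le; rewrite -addrA -opprD; apply: le_subr.
    rewrite join_meet gd; last by apply/nesym.
    rewrite addr0; apply: join_lub; first by apply: Hk.
    by apply: Hn.
have inf : forall y, (forall d, D d -> le y d) -> le y 0.
  move=> y Hy; pose y' := join y 0.
  have Hy' : forall d, D d -> le y' d.
    by move=> d Dd; case: (Dd) => d0 _ _; apply: join_lub => //; apply: Hy.
  have y'0 : le 0 y' by apply: join_ub2.
  have Dy : forall d, D d -> D (d - y').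
    move=> d Dd; case: (Dd) => d0 dh [n Hn]; split.
    - exact: le_subr (Hy' d Dd).
    - exact: le_tr (sub_le0 d y' y'0) dh.
    - exists n => k hk.
      have Dk : D (d - g k) by apply: Dsub => // j hj; apply: Hn; apply: leq_trans hk hj.
      have := le_addr _ _ (g k - y') (Hy' _ Dk).
      by rewrite [y' + _]addrC subrK addrA subrK.
  have Dm : forall m : nat, D (h - m%:R *: y').
    elim => [|m IH]; first by rewrite scale0r subr0.
    have := Dy _ IH.
    by rewrite -natr1 scalerDl scale1r opprD addrA.
  have ny : `|y'| = 0.
    apply: (@archi_small _ `|h|) => //.
    move=> m; case: (Dm m) => d0 _ _.
    have Hm := subr_le _ _ d0.
    have Hm0 : le 0 (m%:R *: y').
      by have := le_scale (ler0n R m) y'0; rewrite scaler0.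
    by have := norm_mono _ _ Hm0 Hm; rewrite normrZ normr_nat.
  have y'E : y' = 0 by apply/eqP; rewrite -normr_eq0 ny.
  by have := join_ub1 y 0; rewrite -/y' y'E.
have ah : bl_abs join h = h := abs_pos _ h0.
have [d [d0 dh [n Hn]] dsmall] : exists2 d, D d & `|d| < eta.
  apply: oc => //.
  - by exists h.
  - by move=> d [d0 dh _]; rewrite ah.
  - move=> a b [a0 ah' [na Ha]] [b0 bh [nb Hb]].
    exists (meet a b); last by split; [apply: meet_lb1 | apply: meet_lb2].
    split.
    + by apply: meet_glb.
    + exact: le_tr (meet_lb1 a b) ah'.
    + exists (maxn na nb) => k hk; apply: meet_glb.
      * by apply: Ha; apply: leq_trans (leq_maxl _ _) hk.
      * by apply: Hb; apply: leq_trans (leq_maxr _ _) hk.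
exists n; apply: le_lt_trans dsmall.
by apply: norm_mono; [case: (gb n) | apply: Hn].
Qed.

Lemma main_sec (E : set F) : is_subspace E ->
  strongly_dispersed le join E -> strictly_dispersed join E.
Proof.
move=> [_ [_ EZ]] [h [eps [oc h0 eps0 Hsd]]].
have [m1 [m2 m0]] : Num.min eps 1 <= eps /\ Num.min eps 1 <= 1 /\ 0 < Num.min eps 1.
  by rewrite !ge_min !lexx orbT /= lt_min eps0 ltr01; split.
set mu := Num.min eps 1 in m1 m2 m0.
exists (mu / 4); first by rewrite divr_gt0.
move=> [f [fd fn fE]].
pose g k := meet (abs (f k)) h.
have gb : forall k, le 0 (g k) /\ le (g k) h.
  by move=> k; split; [apply: meet_glb => //; apply: abs_ge0 | apply: meet_lb2].
have gd : forall j k, j <> k -> meet (g j) (g k) = 0.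
  move=> j k jk; apply: le_anti; last by apply: meet_glb; [case: (gb j)|case: (gb k)].
  have := fd j k jk; rewrite /bl_disjoint => <-.
  by apply: meet_mono; apply: meet_lb1.
have [k gk] := disj_small _ _ oc h0 gb gd _ (divr_gt0 m0 (ltr0n R 4)).
have [e Ee fe] := fE k.
set c := `|e|.
have c1 : 1 - mu / 4 <= c.
  have := ler_normD (f k - e) e; rewrite subrK fn -/c.
  move: fe; set a := `|f k - e|; lra.
have c0 : 0 < c by lra.
pose x := c^-1 *: e.
have Ex : E x by apply: EZ.
have nx : `|x| = 1 by rewrite normrZ ger0_norm ?invr_ge0 ?(ltW c0) // mulVf ?gt_eqF.
apply: (Hsd x Ex nx).
set w := e - f k.
pose t : R := Num.max 1 c^-1.
have t1 : 1 <= t by rewrite le_max lexx.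
have tc : c^-1 <= t by rewrite le_max lexx orbT.
have t2 : t <= 2.
  rewrite ge_max; apply/andP; split; first lra.
  rewrite -(ler_pM2r c0) mulVf ?gt_eqF //; lra.
have le_t : forall (s : R) a, 0 <= s -> s <= t -> le 0 a -> le (s *: a) (t *: a).
  move=> s a s0 st a0; apply: subr_le; rewrite -scalerBl.
  have := le_scale (a := t - s) (x := 0) (y := a); rewrite scaler0; apply => //.
  by rewrite subr_ge0.
have B1 : le (meet (abs x) h) (t *: (g k + abs w)).
  rewrite /x abs_scale ?invr_ge0 ?(ltW c0) //.
  have th : le h (t *: h) by have := le_t 1 h ler01 t1 h0; rewrite scale1r.
  have ci0 : 0 <= c^-1 by rewrite invr_ge0 ltW.
  apply: le_tr (meet_mono _ _ _ _ (le_t _ _ ci0 tc (abs_ge0 e)) th) _.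
  rewrite -scale_meet; last by lra.
  apply: le_scale; first lra.
  rewrite /g meet_tr; apply: meet_mono.
  - by have := abs_tri (f k) w; rewrite /w addrC subrK.
  - by have := le_addl _ _ h (abs_ge0 w); rewrite addr0.
have B0 : le 0 (meet (abs x) h) by apply: meet_glb => //; apply: abs_ge0.
have := norm_mono _ _ B0 B1; rewrite normrZ ger0_norm; last lra.
have := ler_normD (g k) (abs w); rewrite norm_abs -/w.
have : `|w| < mu / 4 by rewrite /w -normrN opprB.
move: gk; set G := `|g k|; set W := `|w|; set N := `|meet (abs x) h|.
move=> *.
have G0 : 0 <= G by apply: normr_ge0.
have W0 : 0 <= W by apply: normr_ge0.
have Hn : `|g k + abs w| <= G + W by [].
have : t * `|g k + abs w| <= t * (G + W) by apply: ler_wpM2l => //; lra.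
nra.
Qed.

End BL.

Theorem proposition4p3 (R : realType) (F : completeNormedModType R)
  (le : F -> F -> Prop) (join : F -> F -> F)
  (HF : is_banach_lattice le join) (E : set F) (HE : is_subspace E) :
  strongly_dispersed le join E -> strictly_dispersed join E.
Proof. exact: main_sec. Qed.
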